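(* Let $\{a(n)\}_{n\in\mathbb{N}}$ be a sequence of non-negative numbers with $\sum_{n=1}^{\infty}a(n)\le 1$. Then for every $\alpha>1$ there exist $\varepsilon(\alpha)>0$ and $\nu(\alpha)\in\mathbb{N}$ such that for every integer $N\ge\nu(\alpha)$ there is a positive integer $\ell_{\alpha,N}<N^{\alpha}$ satisfying $\sum_{n=1}^{N}a(n\cdot\ell_{\alpha,N})<\frac{1}{N^{1+\varepsilon(\alpha)}}$. *)

(* Defs.v *)
From Stdlib Require Import Reals.
Open Scope R_scope.

Definition sum1 (f : nat -> R) (N : nat) : R := sum_f 1 N f.

(* Main.v *)
Require Import Defs.
From Stdlib Require Import Reals Lra Lia ZArith.
From mathcomp Require Import all_boot all_order zify ssralg ssrnum.
From mathcomp Require Import Rstruct.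
Set Implicit Arguments. Unset Strict Implicit.
Import Order.TTheory GRing.Theory Num.Theory.

Local Open Scope nat_scope.

Lemma C_lower k : 2 ^ k <= 'C(k.*2, k).
Proof.
elim: k => [|k IH] //.
rewrite doubleS binS expnS.
have h1 : 'C(k.*2.+1, k.+1) >= 'C(k.*2, k) by rewrite binS; apply: leq_addl.
have h2 : 'C(k.*2.+1, k) >= 'C(k.*2, k) by apply: leq_bin2l.
lia.
Qed.

Lemma sum_le_t t B : \sum_(1 <= i < B) (i <= t : nat) <= t.
Proof.
suff : forall B, \sum_(1 <= i < B.+1) (i <= t : nat) = minn B t.
  by move=> h; case: B => [|B]; [rewrite big_geq | rewrite h; apply: geq_minr].
elim=> [|b IH]; first by rewrite big_geq // min0n.
rewrite big_nat_recr //= IH.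
case: (leqP b.+1 t) => h /=; lia.
Qed.

Lemma logn_fact_ext p n B : prime p -> n < B ->
  logn p n`! = \sum_(1 <= i < B) n %/ p ^ i.
Proof.
move=> pp nB; rewrite logn_fact // [RHS](big_cat_nat (n:=n.+1)) //=.
rewrite [X in _ + X]big1_seq ?addn0 // => i /andP[_].
rewrite mem_index_iota => /andP[hi _]; apply: divn_small.
have := ltn_expl i (prime_gt1 pp); lia.
Qed.

Lemma logn_bin_le p k : prime p -> logn p 'C(k.*2, k) <= trunc_log p k.*2.
Proof.
move=> pp; set n := k.*2; set t := trunc_log p n.
have hC : 0 < 'C(n, k) by rewrite bin_gt0 /n -addnn leq_addr.
have hf := bin_fact (n:=n) (m:=k); rewrite /n -addnn addnK addnn in hf.
have := hf (ltac:(rewrite -addnn; apply: leq_addr) : k <= k.*2).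
move=> {}hf.
have e : logn p (k.*2)`! = logn p 'C(k.*2, k) + (logn p k`! + logn p k`!).
  by rewrite -hf !lognM ?muln_gt0 ?fact_gt0 //.
rewrite (logn_fact_ext (B := n.+1)) // (logn_fact_ext (B := n.+1)) // in e; last first.
  by rewrite /n -addnn; lia.
have hb : \sum_(1 <= i < n.+1) n %/ p ^ i <=
   \sum_(1 <= i < n.+1) (k %/ p ^ i + k %/ p ^ i + (i <= t : nat)).
  apply: leq_sum => i _.
  have pg : 0 < p ^ i by rewrite expn_gt0 prime_gt0.
  case: (leqP (p ^ i) n) => hpi.
    have it : i <= t by apply: trunc_log_max => //; exact: prime_gt1.
    rewrite it /n -addnn divnD //.
    case: (p ^ i <= _); lia.
  by rewrite divn_small.
rewrite !big_split /= in hb.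
have := sum_le_t t n.+1.
rewrite -/n in e.
lia.
Qed.

Lemma cheb k : 0 < k -> 2 ^ k <= (k.*2) ^ (count prime (iota 0 (k.*2).+1)).
Proof.
move=> k0; set n := k.*2.
have n0 : 0 < n by rewrite /n -addnn; lia.
have hC : 0 < 'C(n, k) by rewrite bin_gt0 /n -addnn leq_addr.
apply: leq_trans (C_lower k) _.
rewrite -/n {1}(prod_prime_decomp hC) prime_decompE big_map /=.
have fac : forall p, p \in primes 'C(n, k) -> p ^ logn p 'C(n, k) <= n.
  move=> p; rewrite mem_primes => /andP[pp _].
  apply: leq_trans (trunc_logP (prime_gt1 pp) n0).
  by rewrite leq_pexp2l ?prime_gt0 // logn_bin_le.
apply: (@leq_trans (n ^ size (primes 'C(n, k)))).
  rewrite -iter_muln_1 -count_predT -big_const_seq big_seq [X in _ <= X]big_seq.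
  by apply: leq_prod => p hp; apply: fac.
rewrite leq_pexp2l // -size_filter; apply: uniq_leq_size; first exact: primes_uniq.
move=> p hp; rewrite mem_filter mem_iota /=.
have := hp; rewrite mem_primes => /andP[pp _]; rewrite pp /=.
have := fac p hp; rewrite -logn_gt0 in hp.
have : p <= p ^ logn p 'C(n, k).
  by rewrite -{1}(expn1 p) leq_pexp2l // prime_gt0.
  have := prime_gt0 pp.
lia.
Qed.

Lemma sumR0 (g : nat -> R) m : sum_f_R0 g m = (\sum_(i <- iota 0 m.+1) g i)%R.
Proof.
elim: m => [|m IH]; first by rewrite /= big_seq1.
rewrite [LHS]/= IH -[m.+2]addn1 iotaD big_cat big_seq1 /=.
by [].
Qed.

Lemma sumf_iota (f : nat -> R) N : (0 < N)%N -> sum_f 1 N f = (\sum_(n <- iota 1 N) f n)%R.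
Proof.
move=> N0; rewrite /sum_f sumR0.
have -> : (N - 1).+1 = N by lia.
have -> : iota 1 N = map (addn 1) (iota 0 N) by rewrite -iotaDl.
rewrite big_map.
by apply: eq_bigr => i _; rewrite addnC.
Qed.

Local Open Scope ring_scope.
Lemma sub_sum (a : nat -> R) s M : (forall n, (0 < n)%N -> 0 <= a n) -> uniq s ->
  {subset s <= iota 1 M} -> \sum_(m <- s) a m <= \sum_(m <- iota 1 M) a m.
Proof.
move=> a0 us sub.
rewrite [X in _ <= X](bigID (fun m => m \in s)) /=.
have -> : \sum_(i <- iota 1 M | i \in s) a i = \sum_(m <- s) a m.
  rewrite -big_filter; apply: perm_big; apply: uniq_perm.
  - by apply: filter_uniq; apply: iota_uniq.
  - exact: us.
  by move=> x; rewrite mem_filter; case hx: (x \in s) => //=; rewrite sub.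
rewrite lerDl big_seq_cond; apply: sumr_ge0 => i /andP[hi _]; apply: a0.
by move: hi; rewrite mem_iota; lia.
Qed.

Lemma main_sum (a : nat -> R) N K P : (forall n, (0 < n)%N -> 0 <= a n) ->
  (0 < N)%N -> uniq P -> (forall p, p \in P -> prime p /\ (N < p <= K)%N) ->
  \sum_(p <- P) \sum_(n <- iota 1 N) a (n * p)%N <= \sum_(m <- iota 1 (N * K)) a m.
Proof.
move=> a0 N0 uP hP.
rewrite -(big_allpairs_dep (h := fun p n => (n * p)%N) (r1 := P) (r2 := fun _ => iota 1 N) (F := a)).
apply: sub_sum => //.
  apply: allpairs_uniq => //; first exact: iota_uniq.
  move=> [p n] [p' n'] /allpairsP[[x y] /= [hx hy [-> ->]]]
          /allpairsP[[x' y'] /= [hx' hy' [-> ->]]] /= e.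
  have [px hx1] := hP x hx; have [px' hx1'] := hP x' hx'.
  move: hy hy'; rewrite !mem_iota => hy hy'.
  have dx : (x %| y' * x')%N by rewrite -e dvdn_mull.
  rewrite Euclid_dvdM // in dx; case/orP: dx => dx.
    have := dvdn_leq (_ : 0 < y')%N dx; lia.
  rewrite dvdn_prime2 // in dx; move/eqP: dx => dx; subst x'.
  move/eqP: e; rewrite eqn_pmul2r ?prime_gt0 // => /eqP ->; by [].
move=> m /allpairsP[[x y] /= [hx hy ->]].
have [px hx1] := hP x hx; move: hy; rewrite !mem_iota => hy.
have : (y * x <= N * K)%N by apply: leq_mul; lia.
have : (0 < y * x)%N by rewrite muln_gt0; apply/andP; split; [lia | apply: prime_gt0].
lia.
Qed.

Lemma lower_sum (P : seq nat) (F : nat -> R) c : (forall p, p \in P -> c <= F p) ->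
  (size P)%:R * c <= \sum_(p <- P) F p.
Proof.
move=> h; apply: (@le_trans _ _ (\sum_(p <- P) c)).
  by rewrite big_const_seq count_predT iter_addr_0 mulr_natl.
by rewrite big_seq [X in _ <= X]big_seq; apply: ler_sum => i /h.
Qed.

Definition Pset N K := [seq p <- iota N.+1 (K - N) | prime p].

Lemma Pset_count N K : (N <= K)%N -> (count prime (iota 0 K.+1) <= size (Pset N K) + N.+1)%N.
Proof.
move=> NK; rewrite /Pset size_filter.
have -> : K.+1 = (N.+1 + (K - N))%N by lia.
rewrite iotaD count_cat add0n.
have := count_size prime (iota 0 N.+1); rewrite size_iota; set c := count _ (iota N.+1 _); lia.
Qed.

Lemma Pset_prop N K p : p \in Pset N K -> prime p /\ (N < p <= K)%N.
Proof.
rewrite /Pset mem_filter mem_iota => /andP[-> h]; split => //; lia.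
Qed.

Lemma exists_good (a : nat -> R) (Ha_nonneg : forall n : nat, Peano.le 1 n -> Rle 0 (a n))
  (Ha_sum : forall M : nat, Peano.le 1 M -> Rle (sum_f 1 M a) 1) N K (tau : R) :
  (0 < N)%N -> (N < K)%N -> Rlt 1 (INR (size (Pset N K)) * tau) ->
  exists p, p \in Pset N K /\ Rlt (sum_f 1 N (fun n => a (n * p)%N)) tau.
Proof.
move=> N0 NK big.
have a0 : forall n, (0 < n)%N -> 0 <= a n by move=> n /ssrnat.leP h; apply/RleP; apply: Ha_nonneg.
case: (boolP (has (fun p => sum_f 1 N (fun n => a (n * p)%N) < tau) (Pset N K))).
  move/hasP=> [p hp /RltP h]; by exists p.
move/hasPn=> hall.
have h1 : (size (Pset N K))%:R * tau <= \sum_(p <- Pset N K) sum_f 1 N (fun n => a (n * p)%N).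
  by apply: lower_sum => p /hall; rewrite -leNgt.
have h2 : \sum_(p <- Pset N K) sum_f 1 N (fun n => a (n * p)%N) <= sum_f 1 (N * K) a.
  rewrite sumf_iota; last by rewrite muln_gt0 N0 /=; lia.
  rewrite (eq_bigr (fun p => \sum_(n <- iota 1 N) a (n * p)%N)); last by move=> p _; rewrite sumf_iota.
  apply: main_sum => // [|p /Pset_prop //].
  by rewrite filter_uniq // iota_uniq.
have h3 : sum_f 1 (N * K) a <= 1.
  apply/RleP; apply: Ha_sum; apply/ssrnat.leP; rewrite muln_gt0 N0 /=; lia.
have := le_trans h1 (le_trans h2 h3).
rewrite -INRE => /RleP h; change (Rle (Rmult (INR (size (Pset N K))) tau) 1) in h; lra.
Qed.

Local Close Scope ring_scope.
Local Open Scope R_scope.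

Lemma expn_pow m n : (m ^ n)%N = Nat.pow m n.
Proof. elim: n => [|n IH] //; by rewrite expnS IH. Qed.

Lemma nat_floor (y : R) : 0 <= y -> exists k : nat, INR k <= y < INR k + 1.
Proof.
move=> y0; have [h1 h2] := archimed y.
have z1 : (1 <= up y)%Z.
  have : (0 < up y)%Z by apply: lt_IZR; lra.
  lia.
exists (Z.to_nat (up y - 1)).
rewrite INR_IZR_INZ Z2Nat.id; last lia.
rewrite minus_IZR; lra.
Qed.

Lemma ln_le' x y : 0 < x -> x <= y -> ln x <= ln y.
Proof.
move=> x0 [h|->]; last lra.
by apply: Rlt_le; apply: ln_increasing.
Qed.

Lemma cheb_R k : (0 < k)%N ->
  INR k * ln 2 <= INR (count prime (iota 0 (k.*2).+1)) * ln (INR (k.*2)).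
Proof.
move=> k0; have h := cheb k0.
have h' : INR (2 ^ k) <= INR ((k.*2) ^ (count prime (iota 0 (k.*2).+1))).
  by apply: le_INR; apply/ssrnat.leP.
rewrite !expn_pow !pow_INR in h'.
have k2 : 0 < INR (k.*2) by apply: lt_0_INR; apply/ssrnat.ltP; rewrite -addnn; lia.
rewrite -ln_pow; last lra.
rewrite -ln_pow //.
apply: ln_le' => //; apply: pow_lt; lra.
Qed.

Lemma INR_double k : INR (k.*2) = 2 * INR k.
Proof. rewrite -addnn plus_INR; ring. Qed.

Theorem lemma9 (a : nat -> R)
  (Ha_nonneg : forall n : nat, Peano.le 1 n -> 0 <= a n)
  (Ha_sum : forall M : nat, Peano.le 1 M -> sum_f 1 M a <= 1) :
  forall alpha : R, 1 < alpha ->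
  exists (eps : R) (nu : nat), 0 < eps /\
    forall N : nat, Peano.le nu N -> Peano.le 1 N ->
    exists l : nat, Peano.le 1 l /\ INR l < Rpower (INR N) alpha /\
      sum_f 1 N (fun n => a (Nat.mul n l)) < 1 / Rpower (INR N) (1 + eps).
Proof.
move=> alpha Ha.
set d := (alpha - 1) / 4.
have d0 : 0 < d by rewrite /d; lra.
have l2 : 0 < ln 2 by rewrite -ln_1; apply: ln_increasing; lra.
set A := 6 * alpha / d.
have A0 : 0 < A by apply: Rdiv_lt_0_compat; lra.
have Ad : A * d = 6 * alpha by rewrite /A; field; lra.
set C := A / ln 2 + 4.
have C4 : 4 < C by have := Rdiv_lt_0_compat _ _ A0 l2; rewrite /C; lra.
have Cl : C * ln 2 = A + 4 * ln 2 by rewrite /C; field; lra.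
have [nu0 [_ Hnu]] := nat_floor (Rlt_le _ _ (exp_pos (ln C / (2*d)))).

exists d, nu0.+1; split => // N HN HN1.
have N1 : 1 <= INR N by apply: (le_INR 1).
have hNnu : exp (ln C / (2*d)) < INR N.
  have := le_INR _ _ HN; rewrite S_INR; lra.
set t := ln (INR N).
have et : exp t = INR N by apply: exp_ln; lra.
have lnC0 : 0 < ln C by rewrite -ln_1; apply: ln_increasing; lra.
have tC : ln C / (2*d) < t.
  rewrite -[X in X < _]ln_exp; apply: ln_increasing => //; exact: exp_pos.
have t0 : 0 < t by have := Rdiv_lt_0_compat (ln C) (2*d) lnC0 ltac:(lra); lra.
have tC2 : ln C < 2 * d * t.
  have e : ln C = 2 * d * (ln C / (2 * d)) by field; lra.
  rewrite e; apply: Rmult_lt_compat_l => //; lra.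
set Z := exp (2 * d * t).
have ZC : C < Z by rewrite -[X in X < _]exp_ln; [apply: exp_increasing | lra].
set E := exp ((1 + d) * t).
set Y := exp ((1 + 2 * d) * t).
set X := Rpower (INR N) alpha.
have hX : X = Y * Z by rewrite /X /Rpower /Y /Z -exp_plus; f_equal; rewrite -/t /d; field.
have hXe : X = exp (alpha * t) by [].
have hY : Y = E * exp (d * t) by rewrite /Y /E -exp_plus; f_equal; ring.
have EN : INR N < E by rewrite -et; apply: exp_increasing; nra.
have YE : E < Y by apply: exp_increasing; nra.
have dte : d * t < exp (d * t).
  have := exp_ineq1 (d * t) ltac:(nra); lra.
have X4 : 4 * INR N < X by rewrite hX; nra.
have [k [hk1 hk2]] := @nat_floor ((X - 1) / 2) ltac:(lra).
have k2 : INR (k.*2) = 2 * INR k by apply: INR_double.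
have Nk : (N < k.*2)%N.
  apply/ssrnat.ltP; apply: INR_lt; rewrite k2; lra.
have k0 : (0 < k)%N by move: HN1 => /ssrnat.leP; rewrite -addnn in Nk; lia.
have hch := cheb_R k0.
set pi := count prime (iota 0 (k.*2).+1) in hch.
have lk : ln (INR (k.*2)) < alpha * t.
  rewrite -(ln_exp (alpha * t)); apply: ln_increasing; rewrite k2.
    have : 0 < INR k by apply: lt_0_INR; apply/ssrnat.ltP.
    lra.
  rewrite -hXe; lra.
have pi0 : 0 <= INR pi by apply: pos_INR.
have h1 : INR k * ln 2 <= INR pi * (alpha * t).
  apply: (Rle_trans _ _ _ hch); apply: Rmult_le_compat_l => //; lra.
have hc := Pset_count (ltnW Nk).
have hc' : INR pi <= INR (size (Pset N (k.*2))) + INR N + 1.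
  rewrite -plus_INR -S_INR; apply: le_INR; apply/ssrnat.leP; rewrite -/pi in hc; lia.
have hb : X * ln 2 > Y * (A + 4 * ln 2).
  rewrite hX -Cl; have : 0 < Y * ln 2 by apply: Rmult_lt_0_compat; lra.
  nra.
have hc2 : Y * A > 6 * alpha * E * t.
  rewrite hY; have EA : 0 < E * A by apply: Rmult_lt_0_compat; lra.
  have : E * exp (d * t) * A > E * (d * t) * A by nra.
  have : E * (d * t) * A = 6 * alpha * E * t by rewrite -Ad; ring.
  lra.
have h3 : 3 * E < INR pi.
  have : 6 * alpha * E * t < 2 * INR pi * (alpha * t) by nra.
  have : 0 < alpha * t by nra.
  nra.
set s := INR (size (Pset N (k.*2))) in hc'.
have hs : E < s by lra.
have E0 : 0 < E by lra.
have hst : 1 < INR (size (Pset N (k.*2))) * (1 / E).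
  rewrite -/s; have e : s * (1 / E) - 1 = (s - E) / E by field; lra.
  have := Rdiv_lt_0_compat (s - E) E ltac:(lra) E0; lra.
have N0' : (0 < N)%N by apply/ssrnat.leP; exact HN1.
have [p [hp hsum]] := exists_good Ha_nonneg Ha_sum N0' Nk hst.
have [pp pb] := Pset_prop hp.
exists p; split; first by apply/ssrnat.leP; have := prime_gt0 pp.
split.
  apply: (Rle_lt_trans _ (INR (k.*2))); first by apply: le_INR; apply/ssrnat.leP; case/andP: pb.
  rewrite k2; lra.
by [].
Qed.
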